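(* For $k\ge0$ let $B_k$ be the family of bar $k$-visibility graphs and $A_k$ the family of arc $k$-visibility graphs. Then $A_j\not\subseteq B_i$ for all $i,j\ge 0$.
   Context: A bar $k$-visibility representation is a finite collection of pairwise disjoint closed horizontal line segments (bars) in the plane; two bars are adjacent if there is a vertical segment with endpoints on the two bars intersecting at most $k$ other bars. An arc $k$-visibility representation is a finite collection of pairwise disjoint circular arcs centered at a common point $O$; two arcs are adjacent if there is a segment contained in a line through $O$ (possibly passing through $O$) with endpoints on the two arcs intersecting at most $k$ other arcs (an arc met twice by the radial line counted once). In each case the graph has one vertex per bar/arc and the stated adjacency. *)

(* Defs.v *)
From Stdlib Require Import Reals List Arith.
Open Scope R_scope.

Definition pt := (R * R)%type.

Definition seg (p q z : pt) : Prop :=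
  exists t, 0 <= t <= 1 /\
    z = ((1 - t) * fst p + t * fst q, (1 - t) * snd p + t * snd q).

Definition meets (S : pt -> Prop) (p q : pt) : Prop :=
  exists z, seg p q z /\ S z.

Record bar := Bar { bl : R; br : R; bh : R }.
Definition bar_valid (b : bar) : Prop := bl b < br b.
Definition on_bar (b : bar) (p : pt) : Prop :=
  bl b <= fst p <= br b /\ snd p = bh b.

Record arc := Arc { ar : R; aa : R; ab : R }.
Definition arc_valid (a : arc) : Prop :=
  0 < ar a /\ aa a < ab a < aa a + 2 * PI.
Definition on_arc (a : arc) (p : pt) : Prop :=
  exists t, aa a <= t <= ab a /\ p = (ar a * cos t, ar a * sin t).

(* Objects are indexed by vertices 0..n-1; [shape u] is the point set of
   object u.  Pairwise disjointness: *)
Definition pairwise_disjoint (n : nat) (shape : nat -> pt -> Prop) : Prop :=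
  forall u v, (u < n)%nat -> (v < n)%nat -> u <> v ->
    forall z, ~ (shape u z /\ shape v z).

(* u and v are k-visible: there is an admissible segment with endpoints on
   the two objects meeting at most k other objects (each object counted
   once, whatever the number of intersection points). *)
Definition k_visible (okseg : pt -> pt -> Prop) (n : nat)
    (shape : nat -> pt -> Prop) (k u v : nat) : Prop :=
  exists p q, shape u p /\ shape v q /\ okseg p q /\
    exists S : list nat, (length S <= k)%nat /\
      forall w, (w < n)%nat -> w <> u -> w <> v ->
        meets (shape w) p q -> In w S.

Definition vertical (p q : pt) : Prop := fst p = fst q.
(* segment contained in a line through O (possibly passing through O) *)
Definition radial (p q : pt) : Prop := fst p * snd q - snd p * fst q = 0.

(* A graph on vertex set {0,..,n-1} is given by an adjacency relation
   (only pairs of distinct vertices < n matter). *)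

Definition bar_k_vis_graph (k n : nat) (adj : nat -> nat -> Prop) : Prop :=
  exists B : nat -> bar,
    (forall u, (u < n)%nat -> bar_valid (B u)) /\
    pairwise_disjoint n (fun u => on_bar (B u)) /\
    forall u v, (u < n)%nat -> (v < n)%nat -> u <> v ->
      (adj u v <-> k_visible vertical n (fun w => on_bar (B w)) k u v).

Definition arc_k_vis_graph (k n : nat) (adj : nat -> nat -> Prop) : Prop :=
  exists A : nat -> arc,
    (forall u, (u < n)%nat -> arc_valid (A u)) /\
    pairwise_disjoint n (fun u => on_arc (A u)) /\
    forall u v, (u < n)%nat -> (v < n)%nat -> u <> v ->
      (adj u v <-> k_visible radial n (fun w => on_arc (A w)) k u v).

(* Main.v *)
Require Import Defs.
From Stdlib Require Import Reals List Arith Lra Lia ZArith Permutation Classical.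
Open Scope R_scope.

Definition btw (x a b : R) := (a <= x <= b) \/ (b <= x <= a).

Lemma conv_btw a b t : 0 <= t <= 1 -> btw ((1-t)*a + t*b) a b.
Proof. intros Ht. unfold btw. destruct (Rle_dec a b); [left|right]; split; nra. Qed.

Lemma cos1_int d : cos d = 1 -> exists k:Z, d = 2 * IZR k * PI.
Proof. intro H. assert (Hs : sin (d/2) = 0).
 { pose proof (cos_2a_sin (d/2)) as E. replace (2*(d/2)) with d in E by field. nra. }
 destruct (sin_eq_0_0 _ Hs) as [k Hk]. exists k. lra. Qed.

Lemma key r al be th a b :
  0 < r ->
  meets (on_arc (Arc r (al*PI) (be*PI))) (a*cos(th*PI), a*sin(th*PI)) (b*cos(th*PI), b*sin(th*PI)) ->
  (exists k:Z, al <= th + 2*IZR k <= be /\ btw r a b) \/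
  (exists k:Z, al <= th + 1 + 2*IZR k <= be /\ btw (-r) a b).
Proof.
  intros Hr [z [[t [Ht Hz]] [s [Hs Hz2]]]]. simpl in *.
  rewrite Hz2 in Hz. injection Hz as H1 H2.
  pose proof PI_RGT_0 as Hpi.
  set (l := (1-t)*a + t*b) in *.
  set (c := cos (th*PI)) in *. set (si := sin (th*PI)) in *.
  assert (E1 : r * cos s = l * c) by (rewrite H1; unfold l; ring).
  assert (E2 : r * sin s = l * si) by (rewrite H2; unfold l; ring).
  assert (P : si*si + c*c = 1) by (pose proof (sin2_cos2 (th*PI)); unfold Rsqr in *; unfold c, si; lra).
  assert (Ec : r * cos (s - th*PI) = l).
  { rewrite cos_minus. fold c si. replace l with (l*(si*si+c*c)) by (rewrite P; ring).
    replace (r * (cos s * c + sin s * si)) with ((r*cos s)*c + (r*sin s)*si) by ring.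
    rewrite E1, E2. ring. }
  assert (Es : sin (s - th*PI) = 0).
  { rewrite sin_minus. fold c si. apply Rmult_eq_reg_l with r; [|lra].
    replace (r * (sin s * c - cos s * si)) with ((r*sin s)*c - (r*cos s)*si) by ring.
    rewrite E1, E2. ring. }
  assert (Pd : sin (s - th*PI) ^2 + cos (s - th*PI) ^2 = 1) by (pose proof (sin2_cos2 (s - th*PI)); unfold Rsqr in *; lra).
  rewrite Es in Pd.
  assert (Hc : cos (s - th*PI) = 1 \/ cos (s - th*PI) = -1).
  { assert ((cos (s - th*PI) - 1) * (cos (s - th*PI) + 1) = 0) by nra.
    apply Rmult_integral in H. lra. }
  pose proof (conv_btw a b t Ht) as Hb. fold l in Hb.
  destruct Hc as [Hc|Hc].
  - left. destruct (cos1_int _ Hc) as [k Hk]. exists k. split.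
    + assert (Hs' : s = (th + 2*IZR k)*PI) by lra. rewrite Hs' in Hs. destruct Hs as [Hs1 Hs2].
      split; [apply Rmult_le_reg_r with PI|apply Rmult_le_reg_r with PI]; lra.
    + rewrite Hc in Ec. replace r with l by lra. exact Hb.
  - right. assert (Hc' : cos (s - th*PI - PI) = 1).
    { pose proof (neg_cos (s - th*PI - PI)) as N. replace (s - th * PI - PI + PI) with (s - th*PI) in N by ring. lra. }
    destruct (cos1_int _ Hc') as [k Hk]. exists k. split.
    + assert (Hs' : s = (th + 1 + 2*IZR k)*PI) by lra. rewrite Hs' in Hs. destruct Hs as [Hs1 Hs2].
      split; [apply Rmult_le_reg_r with PI|apply Rmult_le_reg_r with PI]; lra.
    + rewrite Hc in Ec. replace (-r) with l by lra. exact Hb.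
Qed.

Lemma on_arc_pos r al be th : al <= th <= be -> on_arc (Arc r (al*PI) (be*PI)) (r*cos(th*PI), r*sin(th*PI)).
Proof. intros H. pose proof PI_RGT_0. exists (th*PI). simpl. split; [split; nra|reflexivity]. Qed.

Lemma on_arc_m2 r al be th : al <= th - 2 <= be -> on_arc (Arc r (al*PI) (be*PI)) (r*cos(th*PI), r*sin(th*PI)).
Proof. intros H. pose proof PI_RGT_0. exists ((th-2)*PI). simpl. split; [split; nra|].
  replace ((th-2)*PI) with (th*PI - 2*PI) by ring. rewrite cos_minus, sin_minus, cos_2PI, sin_2PI.
  f_equal; ring. Qed.

Lemma on_arc_opp r al be th : al <= th + 1 <= be -> on_arc (Arc r (al*PI) (be*PI)) ((-r)*cos(th*PI), (-r)*sin(th*PI)).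
Proof. intros H. pose proof PI_RGT_0. exists ((th+1)*PI). simpl. split; [split; nra|].
  replace ((th+1)*PI) with (th*PI + PI) by ring. rewrite neg_cos, neg_sin. f_equal; ring. Qed.

Lemma vis_arc n (A : nat -> arc) k u v th a b :
  on_arc (A u) (a*cos(th*PI), a*sin(th*PI)) ->
  on_arc (A v) (b*cos(th*PI), b*sin(th*PI)) ->
  (forall w, (w<n)%nat -> w<>u -> w<>v -> ~ meets (on_arc (A w)) (a*cos(th*PI), a*sin(th*PI)) (b*cos(th*PI), b*sin(th*PI))) ->
  k_visible radial n (fun w => on_arc (A w)) k u v.
Proof. intros Hu Hv Hw. exists (a*cos(th*PI), a*sin(th*PI)), (b*cos(th*PI), b*sin(th*PI)).
  split; [exact Hu|]. split; [exact Hv|]. split. { unfold radial; simpl; ring. }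
  exists nil. split. { simpl; lia. } intros w H1 H2 H3 H4. exfalso. exact (Hw w H1 H2 H3 H4). Qed.

Lemma seg_sym p q z : seg p q z -> seg q p z.
Proof. intros [t [Ht Hz]]. exists (1-t). split; [lra|]. rewrite Hz. f_equal; ring. Qed.

Lemma kvis_sym ok n shape k u v : (forall p q, ok p q -> ok q p) ->
  k_visible ok n shape k u v -> k_visible ok n shape k v u.
Proof. intros Hok [p [q [Hp [Hq [Ho [S [HS HH]]]]]]]. exists q, p. repeat split; auto.
  exists S. split; auto. intros w H1 H2 H3 [z [Hz Hz']]. apply HH; auto. exists z. split; auto. apply seg_sym; auto. Qed.

Lemma radial_sym p q : radial p q -> radial q p.
Proof. unfold radial. intros. lra. Qed.

Lemma nonvis_arc r1 al1 be1 r2 al2 be2 p q :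
  0 < r1 -> 0 < r2 ->
  (forall k:Z, ~ (al2 - be1 <= IZR k <= be2 - al1)) ->
  on_arc (Arc r1 (al1*PI) (be1*PI)) p -> on_arc (Arc r2 (al2*PI) (be2*PI)) q -> ~ radial p q.
Proof. intros H1 H2 Hk [s [Hs ->]] [s' [Hs' ->]]. unfold radial. simpl in *. intros E.
  pose proof PI_RGT_0.
  assert (E' : r1 * r2 * sin (s' - s) = 0) by (rewrite sin_minus; lra).
  assert (Z : sin (s' - s) = 0).
  { apply Rmult_integral in E'. destruct E' as [E'|E']; [|exact E']. apply Rmult_integral in E'; lra. }
  destruct (sin_eq_0_0 _ Z) as [k Hk']. apply (Hk k).
  split; apply Rmult_le_reg_r with PI; lra. Qed.

Lemma arc_norm r al be z : on_arc (Arc r al be) z -> fst z * fst z + snd z * snd z = r * r.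
Proof. intros [s [_ ->]]. simpl. pose proof (sin2_cos2 s). unfold Rsqr in *. nra. Qed.

Ltac kill_k k := (assert (Hkb: (-3 < k < 3)%Z) by (split; apply lt_IZR; simpl; lra));
  (assert (k = -2 \/ k = -1 \/ k = 0 \/ k = 1 \/ k = 2)%Z as Hc by lia);
  destruct Hc as [->|[->|[->|[->| ->]]]]; simpl in *; lra.

Ltac excl := let Hm := fresh "Hm" in intros Hm;
  let k := fresh "k" in let Hk := fresh "Hk" in let Hb := fresh "Hb" in
  apply key in Hm; [destruct Hm as [[k [Hk Hb]]|[k [Hk Hb]]]; unfold btw in Hb;
  first [lra | kill_k k] | lra].

Definition K5 (w : nat) : arc :=
  match w with
  | 0%nat => Arc 1 (5/100*PI) (66/100*PI)
  | 1%nat => Arc (11/10) (70/100*PI) (130/100*PI)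
  | 2%nat => Arc (12/10) (140/100*PI) (195/100*PI)
  | 3%nat => Arc 2 ((-125/100)*PI) (62/100*PI)
  | _ => Arc 3 (58/100*PI) (78/100*PI)
  end.

Ltac arc_pt := simpl; first [apply on_arc_pos; lra | apply on_arc_m2; lra | apply on_arc_opp; lra].
Ltac excls := let w := fresh "w" in let Hw := fresh in let H1 := fresh in let H2 := fresh in
  intros w Hw H1 H2; destruct w as [|[|[|[|[|w]]]]]; try (exfalso; lia); simpl; excl.

Lemma K5_vis j u v : (u < v < 5)%nat -> k_visible radial 5 (fun w => on_arc (K5 w)) j u v.
Proof.
  intros H. pose proof PI_RGT_0.
  destruct u as [|[|[|[|[|u]]]]]; destruct v as [|[|[|[|[|v]]]]]; try (exfalso; lia).
  - apply (vis_arc _ _ _ _ _ (2/10) 1 (-(11/10))). arc_pt. arc_pt. intros w Hw H1 H2; destruct w as [|[|[|[|[|w]]]]]; try (exfalso; lia); simpl; excl.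
  - apply (vis_arc _ _ _ _ _ (5/10) 1 (-(12/10))); [arc_pt|arc_pt|excls].
  - apply (vis_arc _ _ _ _ _ (3/10) 1 2); [arc_pt|arc_pt|excls].
  - apply (vis_arc _ _ _ _ _ (64/100) 1 3); [arc_pt|arc_pt|excls].
  - apply (vis_arc _ _ _ _ _ (8/10) (11/10) (-(12/10))); [arc_pt|arc_pt|excls].
  - apply (vis_arc _ _ _ _ _ 1 (11/10) 2); [arc_pt|arc_pt|excls].
  - apply (vis_arc _ _ _ _ _ (72/100) (11/10) 3); [arc_pt|arc_pt|excls].
  - apply (vis_arc _ _ _ _ _ (16/10) (12/10) 2); [arc_pt|arc_pt|excls].
  - apply kvis_sym; [apply radial_sym|].
    apply (vis_arc _ _ _ _ _ (68/100) 3 (-(12/10))); [arc_pt|arc_pt|excls].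
  - apply (vis_arc _ _ _ _ _ (6/10) 2 3); [arc_pt|arc_pt|excls].
Qed.

Lemma K5_arc j : arc_k_vis_graph j 5 (fun _ _ => True).
Proof.
  exists K5. pose proof PI_RGT_0. split; [|split].
  - intros u Hu. destruct u as [|[|[|[|[|u]]]]]; try (exfalso; lia); unfold arc_valid; simpl; lra.
  - intros u v Hu Hv Huv z [Z1 Z2]. apply arc_norm in Z1. apply arc_norm in Z2.
    destruct u as [|[|[|[|[|u]]]]]; destruct v as [|[|[|[|[|v]]]]]; try (exfalso; lia); simpl in *; lra.
  - intros u v Hu Hv Huv. split; intros _; [|exact I].
    destruct (Nat.lt_total u v) as [L|[L|L]].
    + apply K5_vis; lia.
    + exfalso; lia.
    + apply kvis_sym; [apply radial_sym|]. apply K5_vis; lia.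
Qed.

Definition C4 (w : nat) : arc :=
  match w with
  | 0%nat => Arc 1 (0*PI) (30/100*PI)
  | 1%nat => Arc 2 (25/100*PI) (60/100*PI)
  | 2%nat => Arc 3 (55/100*PI) (90/100*PI)
  | _ => Arc 4 (85/100*PI) (110/100*PI)
  end.

Definition C4adj (u v : nat) : Prop := Nat.even u <> Nat.even v.

Lemma C4_vis j u v : (u < v < 4)%nat -> C4adj u v -> k_visible radial 4 (fun w => on_arc (C4 w)) j u v.
Proof.
  intros H Ha. pose proof PI_RGT_0.
  destruct u as [|[|[|[|u]]]]; destruct v as [|[|[|[|v]]]]; try (exfalso; lia);
   try (exfalso; apply Ha; reflexivity).
  - apply (vis_arc _ _ _ _ _ (27/100) 1 2); [arc_pt|arc_pt|excls].
  - apply (vis_arc _ _ _ _ _ (5/100) 1 (-(4))); [arc_pt|arc_pt|excls].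
  - apply (vis_arc _ _ _ _ _ (58/100) 2 3); [arc_pt|arc_pt|excls].
  - apply (vis_arc _ _ _ _ _ (87/100) 3 4); [arc_pt|arc_pt|excls].
Qed.

Lemma C4_nonvis j u v : (u < v < 4)%nat -> ~ C4adj u v -> ~ k_visible radial 4 (fun w => on_arc (C4 w)) j u v.
Proof.
  intros H Ha [p [q [Hp [Hq [Hr _]]]]]. pose proof PI_RGT_0.
  destruct u as [|[|[|[|u]]]]; destruct v as [|[|[|[|v]]]]; try (exfalso; lia);
   try (apply Ha; unfold C4adj; simpl; discriminate); simpl in Hp, Hq.
  - refine (nonvis_arc _ _ _ _ _ _ _ _ _ _ _ Hp Hq Hr); try lra.
    intros k [K1 K2]. assert (0 < k)%Z by (apply lt_IZR; simpl; lra).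
    assert (k < 1)%Z by (apply lt_IZR; simpl; lra). lia.
  - refine (nonvis_arc _ _ _ _ _ _ _ _ _ _ _ Hp Hq Hr); try lra.
    intros k [K1 K2]. assert (0 < k)%Z by (apply lt_IZR; simpl; lra).
    assert (k < 1)%Z by (apply lt_IZR; simpl; lra). lia.
Qed.

Lemma C4_arc j : arc_k_vis_graph j 4 C4adj.
Proof.
  exists C4. pose proof PI_RGT_0. split; [|split].
  - intros u Hu. destruct u as [|[|[|[|u]]]]; try (exfalso; lia); unfold arc_valid; simpl; lra.
  - intros u v Hu Hv Huv z [Z1 Z2]. apply arc_norm in Z1. apply arc_norm in Z2.
    destruct u as [|[|[|[|u]]]]; destruct v as [|[|[|[|v]]]]; try (exfalso; lia); simpl in *; lra.
  - intros u v Hu Hv Huv.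
    assert (Sy : C4adj u v <-> C4adj v u) by (unfold C4adj; split; intros X Y; apply X; auto).
    destruct (Nat.lt_total u v) as [L|[L|L]]; [|lia|].
    + split; [apply C4_vis; lia|]. intros Hv'. destruct (classic (C4adj u v)) as [A|A]; auto.
      exfalso. exact (C4_nonvis j u v ltac:(lia) A Hv').
    + rewrite Sy. split; [intro A; apply kvis_sym; [apply radial_sym|]; apply C4_vis; auto; lia|].
      intros Hv'. destruct (classic (C4adj v u)) as [A|A]; auto.
      exfalso. apply (C4_nonvis j v u ltac:(lia) A). apply kvis_sym; [apply radial_sym|exact Hv'].
Qed.

Definition I (b : bar) (x : R) := bl b <= x <= br b.
Definition sbtw (h a b : R) := (a < h < b) \/ (b < h < a).

Lemma meets_bar b p q : fst p = fst q -> meets (on_bar b) p q -> I b (fst p) /\ btw (bh b) (snd p) (snd q).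
Proof. intros E [z [[t [Ht Hz]] [Hz1 Hz2]]]. rewrite Hz in Hz1, Hz2. simpl in *.
  rewrite <- E in Hz1. replace ((1 - t) * fst p + t * fst p) with (fst p) in Hz1 by ring.
  split; [exact Hz1|]. rewrite <- Hz2. apply conv_btw; auto. Qed.

Lemma meets_bar_intro b p q : fst p = fst q -> I b (fst p) -> sbtw (bh b) (snd p) (snd q) -> meets (on_bar b) p q.
Proof. intros E Hi Hs. destruct p as [x h1], q as [x' h2]. simpl in *. subst x'.
  assert (Hd : h2 - h1 <> 0) by (unfold sbtw in Hs; lra).
  set (t := (bh b - h1) / (h2 - h1)).
  assert (Tt : t * (h2 - h1) = bh b - h1) by (unfold t; field; auto).
  exists (x, bh b). split; [|split; [exact Hi|reflexivity]].
  exists t. split.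
  - unfold sbtw in Hs. destruct Hs as [Hs|Hs]; split; nra.
  - f_equal; simpl; [ring|nra].
Qed.

Lemma vis_overlap n B k u v : k_visible vertical n (fun w => on_bar (B w)) k u v ->
  exists x, I (B u) x /\ I (B v) x.
Proof. intros [p [q [[Hp1 Hp2] [[Hq1 Hq2] [Hv _]]]]]. exists (fst p). unfold vertical in Hv.
  split; [exact Hp1|]. rewrite Hv; exact Hq1. Qed.

Lemma vis0_fact n B u v : k_visible vertical n (fun w => on_bar (B w)) 0 u v ->
  exists x, I (B u) x /\ I (B v) x /\
    forall w, (w < n)%nat -> w <> u -> w <> v -> I (B w) x -> ~ sbtw (bh (B w)) (bh (B u)) (bh (B v)).
Proof. intros [p [q [[Hp1 Hp2] [[Hq1 Hq2] [Hv [S [HS HH]]]]]]]. unfold vertical in Hv.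
  exists (fst p). split; [exact Hp1|]. split; [rewrite Hv; exact Hq1|].
  intros w Hw H1 H2 Hi Hs. destruct S; [|simpl in HS; lia].
  apply (HH w Hw H1 H2). apply meets_bar_intro; auto. rewrite Hp2, Hq2. exact Hs. Qed.

Lemma notI b x : ~ I b x -> x < bl b \/ br b < x.
Proof. unfold I. intros H. destruct (Rlt_dec x (bl b)); [left; auto|]. destruct (Rlt_dec (br b) x); [right; auto|].
  exfalso; apply H; lra. Qed.

Section Sort.
Variable f : nat -> R.
Fixpoint ins (x:nat) (l:list nat) : list nat :=
  match l with nil => x::nil | y::l' => if Rlt_dec (f x) (f y) then x::y::l' else y :: ins x l' end.
Fixpoint srt l := match l with nil => nil | x::l' => ins x (srt l') end.
Lemma ins_perm x l : Permutation (x::l) (ins x l).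
Proof. induction l; simpl. auto. destruct (Rlt_dec (f x) (f a)). auto.
  eapply perm_trans. apply perm_swap. constructor. auto. Qed.
Lemma srt_perm l : Permutation l (srt l).
Proof. induction l; simpl; auto. eapply perm_trans. apply perm_skip, IHl. apply ins_perm. Qed.
Fixpoint incr (l:list nat) : Prop :=
  match l with x :: ((y :: _) as t) => f x < f y /\ incr t | _ => True end.
Definition hd_gt (z:nat) l := match l with nil => True | y::_ => f z < f y end.
Lemma incr_cons y t : incr (y::t) <-> hd_gt y t /\ incr t.
Proof. destruct t; simpl; tauto. Qed.
Lemma ins_incr x l : incr l -> (forall y, In y l -> f x <> f y) ->
  incr (ins x l) /\ (forall z, f z < f x -> hd_gt z l -> hd_gt z (ins x l)).
Proof. induction l as [|y l IH]; intros Hi Hd.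
  - simpl. split; auto.
  - simpl. destruct (Rlt_dec (f x) (f y)) as [L|L].
    + split. { simpl. split; auto. } intros z Hz _. simpl. auto.
    + assert (L' : f y < f x). { assert (f x <> f y) by (apply Hd; simpl; auto). lra. }
      apply incr_cons in Hi. destruct Hi as [Hh Hi].
      destruct (IH Hi) as [I1 I2]. { intros y' Hy'. apply Hd. simpl; auto. }
      split. { apply incr_cons. split; auto. }
      intros z Hz Hh'. simpl in *. auto.
Qed.
Lemma srt_incr l : NoDup l -> (forall x y, In x l -> In y l -> x <> y -> f x <> f y) -> incr (srt l).
Proof. induction l as [|x l IH]; intros Hn Hd. simpl; auto.
  inversion Hn; subst. simpl. apply ins_incr.
  - apply IH; auto. intros; apply Hd; simpl; auto.
  - intros y Hy. apply (Permutation_in _ (Permutation_sym (srt_perm l))) in Hy.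
    apply Hd; simpl; auto. intro; subst; contradiction.
Qed.
End Sort.

Definition VF (B : nat -> bar) u v := exists x, I (B u) x /\ I (B v) x /\
    forall w, (w < 5)%nat -> w <> u -> w <> v -> I (B w) x -> ~ sbtw (bh (B w)) (bh (B u)) (bh (B v)).

Ltac getx B Hall u v m x :=
  let A := fresh "A" in let C := fresh "C" in let W := fresh "W" in
  destruct (Hall u v ltac:(lia) ltac:(lia) ltac:(intro; subst; lra)) as [x [A [C W]]];
  let N := fresh "N" in let Hi := fresh "Hi" in
  assert (N : ~ I (B m) x) by (intro Hi; apply (W m ltac:(lia) ltac:(intro; subst; lra) ltac:(intro; subst; lra) Hi); unfold sbtw; lra);
  apply notI in N; unfold I in *.

Ltac getx2 B Hall u v m m' x :=
  let A := fresh "A" in let C := fresh "C" in let W := fresh "W" in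
  destruct (Hall u v ltac:(lia) ltac:(lia) ltac:(intro; subst; lra)) as [x [A [C W]]];
  let N := fresh "N" in let Hi := fresh "Hi" in
  assert (N : ~ I (B m) x) by (intro Hi; apply (W m ltac:(lia) ltac:(intro; subst; lra) ltac:(intro; subst; lra) Hi); unfold sbtw; lra);
  apply notI in N;
  let N' := fresh "N" in
  assert (N' : ~ I (B m') x) by (intro Hi; apply (W m' ltac:(lia) ltac:(intro; subst; lra) ltac:(intro; subst; lra) Hi); unfold sbtw; lra);
  apply notI in N'; unfold I in *.

Lemma core (B : nat -> bar) a b c d e :
  (a < 5)%nat -> (b < 5)%nat -> (c < 5)%nat -> (d < 5)%nat -> (e < 5)%nat ->
  bh (B a) < bh (B b) -> bh (B b) < bh (B c) -> bh (B c) < bh (B d) -> bh (B d) < bh (B e) ->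
  (forall u v, (u < 5)%nat -> (v < 5)%nat -> u <> v -> VF B u v) -> False.
Proof.
  intros Ha Hb Hc Hd He H1 H2 H3 H4 Hall.
  getx B Hall a c b x1.
  getx B Hall b d c x2.
  getx B Hall c e d x3.
  getx2 B Hall a d b c x4.
  getx2 B Hall b e c d x6.
  destruct (Hall b c ltac:(lia) ltac:(lia) ltac:(intro; subst; lra)) as [y1 [Y1 [Y2 _]]].
  destruct (Hall c d ltac:(lia) ltac:(lia) ltac:(intro; subst; lra)) as [y2 [Y3 [Y4 _]]].
  unfold I in *.
  lra.
Qed.

Lemma K5_notbar : ~ bar_k_vis_graph 0 5 (fun _ _ => True).
Proof.
  intros [B [Hv [Hd Hiff]]].
  assert (Hall : forall u v, (u < 5)%nat -> (v < 5)%nat -> u <> v -> VF B u v).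
  { intros u v Hu Hv' Huv. apply vis0_fact. apply (Hiff u v Hu Hv' Huv). exact Logic.I. }
  set (f := fun w => bh (B w)).
  set (l0 := 0%nat :: 1%nat :: 2%nat :: 3%nat :: 4%nat :: nil).
  assert (Hl : forall x, In x l0 -> (x < 5)%nat) by (intros x Hx; simpl in Hx; lia).
  assert (Hinc : incr f (srt f l0)).
  { apply srt_incr.
    - repeat constructor; simpl; lia.
    - intros x y Hx Hy Hxy E. apply Hl in Hx. apply Hl in Hy.
      destruct (Hall x y Hx Hy Hxy) as [x0 [A [C _]]].
      apply (Hd x y Hx Hy Hxy (x0, bh (B x))). split; split; simpl; auto. }
  pose proof (srt_perm f l0) as P.
  destruct (srt f l0) as [|a [|b [|c [|d [|e [|z r]]]]]] eqn:El;
    try (apply Permutation_length in P; simpl in P; lia).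
  simpl in Hinc.
  assert (Hin : forall x, In x (a::b::c::d::e::nil) -> (x < 5)%nat).
  { intros x Hx. apply Hl. apply (Permutation_in _ (Permutation_sym P)). exact Hx. }
  apply (core B a b c d e); try (apply Hin; simpl; tauto); try tauto.
Qed.

Lemma bar_btw_lin h a b : btw h a b -> (a <= h <= b) \/ (b <= h <= a).
Proof. auto. Qed.

Lemma C4_notbar i : (1 <= i)%nat -> ~ bar_k_vis_graph i 4 (fun u v => Nat.even u <> Nat.even v).
Proof.
  intros Hi [B [Hv [Hd Hiff]]].
  assert (Adj : forall u v, (u < 4)%nat -> (v < 4)%nat -> Nat.even u <> Nat.even v ->
            exists x, I (B u) x /\ I (B v) x).
  { intros u v Hu Hv' Ha. assert (u <> v) by (intro; subst; auto).
    apply (vis_overlap 4 B i). apply (Hiff u v Hu Hv' H). exact Ha. }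
  assert (NV : forall u v w1 w2, (u < 4)%nat -> (v < 4)%nat -> (w1 < 4)%nat -> (w2 < 4)%nat -> u <> v ->
            Nat.even u = Nat.even v ->
            (forall w, (w < 4)%nat -> w <> u -> w <> v -> w = w1 \/ w = w2) ->
            forall x, I (B u) x -> I (B v) x ->
            (I (B w1) x /\ btw (bh (B w1)) (bh (B u)) (bh (B v))) /\
            (I (B w2) x /\ btw (bh (B w2)) (bh (B u)) (bh (B v)))).
  { intros u v w1 w2 Hu Hv' Hw1 Hw2 Huv Heq Hw x Ix Iy.
    set (p := (x, bh (B u))). set (q := (x, bh (B v))).
    assert (NK : ~ k_visible vertical 4 (fun w => on_bar (B w)) i u v).
    { intro K. apply (Hiff u v Hu Hv' Huv) in K. auto. }
    destruct (classic (meets (on_bar (B w1)) p q)) as [M1|M1];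
    destruct (classic (meets (on_bar (B w2)) p q)) as [M2|M2].
    - apply meets_bar in M1; [|reflexivity]. apply meets_bar in M2; [|reflexivity]. simpl in *. tauto.
    - exfalso. apply NK. exists p, q. split; [split; simpl; auto|]. split; [split; simpl; auto|].
      split; [reflexivity|]. exists (w1 :: nil). split; [simpl; lia|].
      intros w Hw' H1 H2 Hm. destruct (Hw w Hw' H1 H2); subst; simpl; tauto.
    - exfalso. apply NK. exists p, q. split; [split; simpl; auto|]. split; [split; simpl; auto|].
      split; [reflexivity|]. exists (w2 :: nil). split; [simpl; lia|].
      intros w Hw' H1 H2 Hm. destruct (Hw w Hw' H1 H2); subst; simpl; tauto.
    - exfalso. apply NK. exists p, q. split; [split; simpl; auto|]. split; [split; simpl; auto|].
      split; [reflexivity|]. exists nil. split; [simpl; lia|].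
      intros w Hw' H1 H2 Hm. destruct (Hw w Hw' H1 H2); subst; tauto. }
  assert (W02 : forall w, (w < 4)%nat -> w <> 0%nat -> w <> 2%nat -> w = 1%nat \/ w = 3%nat) by (intros; lia).
  assert (W13 : forall w, (w < 4)%nat -> w <> 1%nat -> w <> 3%nat -> w = 0%nat \/ w = 2%nat) by (intros; lia).
  pose proof (fun x => NV 0%nat 2%nat 1%nat 3%nat ltac:(lia) ltac:(lia) ltac:(lia) ltac:(lia) ltac:(lia) eq_refl W02 x) as NA.
  pose proof (fun x => NV 1%nat 3%nat 0%nat 2%nat ltac:(lia) ltac:(lia) ltac:(lia) ltac:(lia) ltac:(lia) eq_refl W13 x) as NB.
  assert (DJ : forall u v x, (u < 4)%nat -> (v < 4)%nat -> u <> v -> I (B u) x -> I (B v) x -> bh (B u) <> bh (B v)).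
  { intros u v x Hu Hv' Huv Iu Iv E. apply (Hd u v Hu Hv' Huv (x, bh (B u))). split; split; simpl; auto. }
  destruct (classic (exists x, I (B 0%nat) x /\ I (B 2%nat) x)) as [[x [I0 I2]]|N02].
  - destruct (NA x I0 I2) as [[I1 B1] [I3 B3]].
    destruct (NB x I1 I3) as [[_ B0] [_ B2]].
    pose proof (DJ 0%nat 1%nat x ltac:(lia) ltac:(lia) ltac:(lia) I0 I1).
    pose proof (DJ 0%nat 3%nat x ltac:(lia) ltac:(lia) ltac:(lia) I0 I3).
    pose proof (DJ 2%nat 1%nat x ltac:(lia) ltac:(lia) ltac:(lia) I2 I1).
    pose proof (DJ 2%nat 3%nat x ltac:(lia) ltac:(lia) ltac:(lia) I2 I3).
    unfold btw in *.
    destruct (Rtotal_order (bh (B 0%nat)) (bh (B 1%nat))) as [?|[?|?]]; try contradiction;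
    destruct (Rtotal_order (bh (B 0%nat)) (bh (B 3%nat))) as [?|[?|?]]; try contradiction;
    destruct (Rtotal_order (bh (B 2%nat)) (bh (B 1%nat))) as [?|[?|?]]; try contradiction;
    destruct (Rtotal_order (bh (B 2%nat)) (bh (B 3%nat))) as [?|[?|?]]; try contradiction; lra.
  - destruct (classic (exists x, I (B 1%nat) x /\ I (B 3%nat) x)) as [[x [I1 I3]]|N13].
    + destruct (NB x I1 I3) as [[I0 _] [I2 _]]. apply N02. exists x; auto.
    + destruct (Adj 0%nat 1%nat ltac:(lia) ltac:(lia) ltac:(discriminate)) as [y1 [P1 P2]].
      destruct (Adj 1%nat 2%nat ltac:(lia) ltac:(lia) ltac:(discriminate)) as [y2 [P3 P4]].
      destruct (Adj 2%nat 3%nat ltac:(lia) ltac:(lia) ltac:(discriminate)) as [y3 [P5 P6]].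
      destruct (Adj 3%nat 0%nat ltac:(lia) ltac:(lia) ltac:(discriminate)) as [y4 [P7 P8]].
      pose proof (Hv 0%nat ltac:(lia)). pose proof (Hv 1%nat ltac:(lia)).
      pose proof (Hv 2%nat ltac:(lia)). pose proof (Hv 3%nat ltac:(lia)). unfold bar_valid in *.
      assert (D02 : br (B 0%nat) < bl (B 2%nat) \/ br (B 2%nat) < bl (B 0%nat)).
      { destruct (Rlt_dec (br (B 0%nat)) (bl (B 2%nat))); [left; auto|].
        destruct (Rlt_dec (br (B 2%nat)) (bl (B 0%nat))); [right; auto|].
        exfalso; apply N02. exists (Rmax (bl (B 0%nat)) (bl (B 2%nat))). unfold I, Rmax.
        destruct (Rle_dec (bl (B 0%nat)) (bl (B 2%nat))); lra. }
      assert (D13 : br (B 1%nat) < bl (B 3%nat) \/ br (B 3%nat) < bl (B 1%nat)).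
      { destruct (Rlt_dec (br (B 1%nat)) (bl (B 3%nat))); [left; auto|].
        destruct (Rlt_dec (br (B 3%nat)) (bl (B 1%nat))); [right; auto|].
        exfalso; apply N13. exists (Rmax (bl (B 1%nat)) (bl (B 3%nat))). unfold I, Rmax.
        destruct (Rle_dec (bl (B 1%nat)) (bl (B 3%nat))); lra. }
      unfold I in *. lra.
Qed.

Theorem mainTheorem14 : forall i j : nat,
  exists (n : nat) (adj : nat -> nat -> Prop),
    arc_k_vis_graph j n adj /\ ~ bar_k_vis_graph i n adj.
Proof.
  intros i j. destruct i as [|i].
  - exists 5%nat, (fun _ _ => True). split; [apply K5_arc | apply K5_notbar].
  - exists 4%nat, C4adj. split; [apply C4_arc | apply C4_notbar; lia].
Qed.
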